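(* Let $X$ be a finite set and let $C_i,C_j\in\mathcal C_X$ be distinct. Then $C_i$ and $C_j$ cover a common element $w$ of $S(X)$ if and only if $C_j$ can be obtained from $C_i$ by a nearest neighbor interchange over some internal edge $\alpha$ of $C_i$.
   Context: An $X$-tree is a pair $(T,\phi)$ with $T$ a finite tree and $\phi:X\to V(T)$ a map such that every vertex not in $\phi(X)$ has degree at least $3$; a vertex is labeled if it lies in $\phi(X)$. An $X$-forest is a set $\{(A,\mathcal T_A):A\in\pi\}$ where $\pi$ is a set partition of $X$ and each $\mathcal T_A$ is an $A$-tree. Contracting an edge $e=(u,v)$ removes $e$ and identifies $u,v$, the new vertex carrying the union of the labels of $u$ and $v$. Deleting $e$ removes $e$ without changing vertices; the deletion is safe if each of $u$ and $v$ is labeled or has degree greater than $3$. The Tuffley poset $S(X)$ is the set of $X$-forests ordered by $\mathcal F'\le\mathcal F$ iff $\mathcal F'$ is obtained from $\mathcal F$ by a sequence of contractions and safe deletions; $\mathcal F'\lessdot \mathcal F$ iff $\mathcal F'$ is obtained by a single contraction or safe deletion. $\mathcal C_X$ denotes the set of maximal elements of $S(X)$: trees whose leaves are labeled bijectively by $X$ and whose internal vertices are unlabeled of degree $3$. An internal edge is an edge both of whose endpoints are internal vertices. Nearest neighbor interchange (NNI): for $C\in\mathcal C_X$ and an internal edge $\alpha=(u,v)$, the edge $\alpha$ separates subtrees $A,B$ attached at $u$ from subtrees $C',D$ attached at $v$. Swapping $B$ with $C'$, or swapping $B$ with $D$, yields a new tree in $\mathcal C_X$; obtaining either of these from $C$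 is an NNI over $\alpha$. *)

(* Defs.v *)
From mathcomp Require Import all_boot.
Unset Implicit Arguments.
Unset Strict Implicit.
Unset Printing Implicit Defensive.

(* All objects (X-forests, X-trees)
   are considered up to label-preserving graph isomorphism ([iso]). *)
Record xgraph (X : finType) := XGraph {
  nv : nat;
  adj : rel 'I_nv;
  lab : X -> 'I_nv
}.
Arguments nv {X} x.
Arguments adj {X} x _ _.
Arguments lab {X} x _.

Section Defs.
Variable X : finType.
Implicit Types G H : xgraph X.

Definition simple G :=
  (forall x, ~~ adj G x x) /\ (forall x y, adj G x y = adj G y x).

Definition acyclic G :=
  forall s : seq 'I_(nv G), uniq s -> 2 < size s -> ~~ cycle (adj G) s.

Definition labeled G (v : 'I_(nv G)) := exists a, lab G a = v.

Definition deg G (v : 'I_(nv G)) := #|[set w | adj G v w]|.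

Definition iso G H :=
  exists f : 'I_(nv G) -> 'I_(nv H),
    bijective f /\ (forall x y, adj H (f x) (f y) = adj G x y) /\
    (forall a, f (lab G a) = lab H a).

(* An X-forest: a forest each of whose components contains a labelled vertex
   (each component is an A-tree for a block A of a partition of X), and
   whose unlabelled vertices have degree >= 3. *)
Definition is_Xforest G :=
  simple G /\ acyclic G /\
  (forall v, exists a, connect (adj G) v (lab G a)) /\
  (forall v, ~ labeled G v -> 3 <= deg G v).

Definition is_tree G :=
  simple G /\ acyclic G /\ (forall v w, connect (adj G) v w).

(* C_X: trees whose leaves are labelled bijectively by X and whose internal
   vertices are unlabelled of degree 3.  (A vertex of degree <= 1 is a leaf;
   degree 0 only occurs for the one-vertex tree when |X| = 1.) *)
Definition in_CX G :=
  is_tree G /\ injective (lab G) /\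
  (forall v, labeled G v <-> deg G v <= 1) /\
  (forall v, ~ labeled G v -> deg G v = 3).

Definition upair {n} (x y a b : 'I_n) : bool :=
  ((x == a) && (y == b)) || ((x == b) && (y == a)).

(* H is (isomorphic to) the result of contracting the edge {u,v} of G:
   g : V(G) -> V(H) is onto and identifies exactly u and v; edges of H are
   the images of edges of G other than {u,v}; labels are carried along. *)
Definition contraction G H :=
  exists (u v : 'I_(nv G)), adj G u v /\
  exists g : 'I_(nv G) -> 'I_(nv H),
    (forall y, exists x, g x = y) /\
    (forall x y, g x = g y <-> (x = y \/ upair x y u v)) /\
    (forall a b, adj H a b <->
        (a <> b /\ exists a0 b0, [/\ g a0 = a, g b0 = b & adj G a0 b0])) /\
    (forall x, lab H x = g (lab G x)).

Definition safe_deletion G H :=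
  exists (u v : 'I_(nv G)), adj G u v /\
  (labeled G u \/ 3 < deg G u) /\ (labeled G v \/ 3 < deg G v) /\
  exists g : 'I_(nv G) -> 'I_(nv H),
    bijective g /\
    (forall x y, adj H (g x) (g y) = adj G x y && ~~ upair x y u v) /\
    (forall x, lab H x = g (lab G x)).

Definition covby G' G := contraction G G' \/ safe_deletion G G'.

(* Tree obtained from G by the NNI over edge {u,v}, where b is a neighbour
   of u (b <> v) and c a neighbour of v (c <> u): the subtrees at b and c
   are swapped, i.e. edges {u,b},{v,c} are replaced by {u,c},{v,b}. *)
Definition nni_graph G (u v b c : 'I_(nv G)) : xgraph X :=
  @XGraph X (nv G)
    (fun x y => (adj G x y && ~~ upair x y u b && ~~ upair x y v c)
                || upair x y u c || upair x y v b)
    (lab G).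

Definition NNI G H :=
  exists (u v b c : 'I_(nv G)),
    [/\ adj G u v, ~ labeled G u, ~ labeled G v, adj G u b & b != v] /\
    adj G v c /\ c != u /\ iso (nni_graph G u v b c) H.

End Defs.

Arguments simple {X} G.
Arguments acyclic {X} G.
Arguments labeled {X} G v.
Arguments deg {X} G v.
Arguments iso {X} G H.
Arguments is_Xforest {X} G.
Arguments is_tree {X} G.
Arguments in_CX {X} G.
Arguments contraction {X} G H.
Arguments safe_deletion {X} G H.
Arguments covby {X} G' G.
Arguments nni_graph {X} G u v b c.
Arguments NNI {X} G H.

(* Main.v *)
Require Import Defs.
From mathcomp Require Import all_boot zify.
Set Implicit Arguments. Unset Strict Implicit. Unset Printing Implicit Defensive.

Lemma labeledP (X : finType) (G : xgraph X) v :
  reflect (labeled G v) [exists a, lab G a == v].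
Proof.
apply: (iffP existsP) => [[a /eqP]|[a]] H; by exists a; rewrite ?H.
Qed.

Lemma upairC n (x y a b : 'I_n) : upair x y a b = upair y x a b.
Proof. by rewrite /upair orbC; congr orb; apply: andbC. Qed.

Lemma upair_n n (x y a b : 'I_n) : x != a -> x != b -> upair x y a b = false.
Proof. by move=> /negbTE H1 /negbTE H2; rewrite /upair H1 H2. Qed.


Lemma s_irr (X : finType) (G : xgraph X) : simple G -> forall x, adj G x x = false.
Proof. by case=> H _ x; apply/negbTE. Qed.

Lemma s_sym (X : finType) (G : xgraph X) : simple G -> forall x y, adj G x y = adj G y x.
Proof. by case. Qed.

Lemma s_neq (X : finType) (G : xgraph X) x y : simple G -> adj G x y -> x != y.
Proof. by move=> S; apply: contraTneq => ->; rewrite s_irr. Qed.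

Lemma no_tri (X : finType) (G : xgraph X) x y z : simple G -> acyclic G ->
  adj G x y -> adj G y z -> adj G x z -> False.
Proof.
move=> S A xy yz xz.
have := A [:: x; y; z]; rewrite /= !inE !negb_or (s_neq S xy) (s_neq S yz) (s_neq S xz).
by rewrite /= xy yz (s_sym S z x) xz => /(_ isT isT).
Qed.

Lemma cx_simple (X : finType) (G : xgraph X) : in_CX G -> simple G.
Proof. by case=> [[]]. Qed.
Lemma cx_acyclic (X : finType) (G : xgraph X) : in_CX G -> acyclic G.
Proof. by case=> [[_ []]]. Qed.

Lemma cx_leaf (X : finType) (G : xgraph X) x y z : in_CX G -> labeled G x ->
  adj G x y -> adj G x z -> y = z.
Proof.
case=> _ [_ [H _]] /H; rewrite /deg => L xy xz.
apply/eqP; apply: contraLR L => yz; rewrite -ltnNge.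
apply: (@leq_trans #|[set y; z]|); first by rewrite cards2 yz.
by apply: subset_leq_card; apply/subsetP => t; rewrite !inE => /orP[]/eqP->; rewrite ?xy ?xz.
Qed.

Lemma cx_unl (X : finType) (G : xgraph X) x y : in_CX G -> ~ labeled G x ->
  adj G x y -> exists a c, [/\ a != c, a != y, c != y, adj G x a & adj G x c] /\
   (forall z, adj G x z -> [\/ z = y, z = a | z = c]).
Proof.
case=> _ [_ [_ H]] /H; rewrite /deg => D xy.
have : #|[set t | adj G x t] :\ y| == 2.
  by move: D; rewrite (cardsD1 y) inE xy add1n => -[->].
case/cards2P => a [c [ac E]].
have : a \in [set t | adj G x t] :\ y by rewrite E !inE eqxx.
have : c \in [set t | adj G x t] :\ y by rewrite E !inE eqxx orbT.
rewrite !inE => /andP[cy xc] /andP[ay xa].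
exists a, c; split => // z xz.
case: (eqVneq z y) => [->|zy]; first by constructor 1.
have : z \in [set t | adj G x t] :\ y by rewrite !inE zy xz.
by rewrite E !inE => /orP[]/eqP->; [constructor 2|constructor 3].
Qed.

Definition ctr (X : finType) (G w : xgraph X) (u v : 'I_(nv G)) (g : 'I_(nv G) -> 'I_(nv w)) :=
  [/\ adj G u v, (forall y, exists x, g x = y), (forall x y, g x = g y <-> (x = y \/ upair x y u v)),
      (forall a b, adj w a b <-> (a <> b /\ exists a0 b0, [/\ g a0 = a, g b0 = b & adj G a0 b0])) &
      (forall x, lab w x = g (lab G x))].

Lemma contractionP (X : finType) (G w : xgraph X) :
  contraction G w <-> exists u v g, @ctr X G w u v g.
Proof.
split.
  by case=> u [v [uv [g [H1 [H2 [H3 H4]]]]]]; exists u, v, g; split.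
by case=> u [v [g [H1 H2 H3 H4 H5]]]; exists u, v; split => //; exists g.
Qed.


Lemma ctr_uv (X : finType) (G w : xgraph X) u v g :
  simple G -> @ctr X G w u v g -> u != v.
Proof. by move=> S [uv _ _ _ _]; apply: s_neq uv. Qed.

Lemma ctr_m (X : finType) (G w : xgraph X) u v g x :
  simple G -> @ctr X G w u v g -> (g x == g u) = (x == u) || (x == v).
Proof.
move=> S C; have uv := ctr_uv S C; case: C => _ _ F _ _.
apply/eqP/idP.
  move/F => [->|]; first by rewrite eqxx.
  by rewrite /upair (negbTE uv) andbF eqxx andbT /= => ->; rewrite orbT.
by case/orP => /eqP ->; apply/F; [left|right; rewrite /upair !eqxx orbT].
Qed.

Lemma ctr_vu (X : finType) (G w : xgraph X) u v g :
  simple G -> @ctr X G w u v g -> g v = g u.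
Proof. by move=> S C; apply/eqP; rewrite (ctr_m _ S C) eqxx orbT. Qed.

Lemma ctr_fib (X : finType) (G w : xgraph X) u v g x y :
  simple G -> @ctr X G w u v g -> x != u -> x != v -> g y = g x -> y = x.
Proof.
move=> S [_ _ F _ _] xu xv /F [//|]; rewrite upairC upair_n //.
Qed.

Lemma ctr_ne (X : finType) (G w : xgraph X) u v g x :
  simple G -> @ctr X G w u v g -> x != u -> x != v -> g x != g u.
Proof. by move=> S C xu xv; rewrite (ctr_m _ S C) negb_or xu xv. Qed.

Lemma ctr_adjN (X : finType) (G w : xgraph X) u v g x y :
  simple G -> @ctr X G w u v g -> x != u -> x != v -> y != u -> y != v ->
  adj w (g x) (g y) = adj G x y.
Proof.
move=> S C xu xv yu yv; have C' := C; case: C' => _ _ F A _.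
apply/idP/idP.
  move/A => [_ [a0 [b0 [ea eb ab]]]].
  by rewrite -(ctr_fib S C xu xv ea) -(ctr_fib S C yu yv eb).
move=> xy; apply/A; split; last by exists x, y.
move/F => [E|]; first by move: xy; rewrite E s_irr.
by rewrite upair_n.
Qed.

Lemma ctr_adjM (X : finType) (G w : xgraph X) u v g x :
  simple G -> @ctr X G w u v g -> x != u -> x != v ->
  adj w (g u) (g x) = adj G u x || adj G v x.
Proof.
move=> S C xu xv; have C' := C; case: C' => _ _ F A _.
apply/idP/idP.
  move/A => [_ [a0 [b0 [ea eb ab]]]].
  move: (ctr_fib S C xu xv eb) ab => ->.
  by have := ctr_m a0 S C; rewrite ea eqxx => /esym/orP[]/eqP-> ->; rewrite ?orbT.
move=> H; apply/A; split; first by apply/eqP; rewrite eq_sym (ctr_ne S C).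
case/orP: H => H; first by exists u, x.
by exists v, x; rewrite (ctr_vu S C).
Qed.

Lemma ctr_simple (X : finType) (G w : xgraph X) u v g :
  simple G -> @ctr X G w u v g -> simple w.
Proof.
move=> S [_ _ _ A _]; split.
  by move=> x; apply/negP => /A [].
move=> x y; apply/idP/idP => /A [xy [a0 [b0 [ea eb ab]]]]; apply/A;
  (split; [by move=> E; apply: xy| exists b0, a0; split => //; by rewrite s_sym]).
Qed.

Lemma ctr_labM (X : finType) (G w : xgraph X) u v g a :
  simple G -> @ctr X G w u v g ->
  (lab w a == g u) = (lab G a == u) || (lab G a == v).
Proof. by move=> S C; have [_ _ _ _ ->] := C; rewrite (ctr_m _ S C). Qed.

Lemma ctr_labN (X : finType) (G w : xgraph X) u v g a z :
  simple G -> @ctr X G w u v g -> z != u -> z != v ->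
  (lab w a == g z) = (lab G a == z).
Proof.
move=> S C zu zv; have [_ _ _ _ ->] := C.
by apply/eqP/eqP => [/(ctr_fib S C zu zv)|->].
Qed.

Definition pre (X : finType) (G w : xgraph X) (u : 'I_(nv G)) (g : 'I_(nv G) -> 'I_(nv w)) y :=
  odflt u [pick x | g x == y].

Lemma preK (X : finType) (G w : xgraph X) u v g y :
  @ctr X G w u v g -> g (pre u g y) = y.
Proof.
move=> [_ Su _ _ _]; rewrite /pre; case: pickP => [x /eqP //|H].
by have [x E] := Su y; move: (H x); rewrite E eqxx.
Qed.

Lemma gK (X : finType) (G w : xgraph X) u v g x :
  simple G -> @ctr X G w u v g -> x != u -> x != v -> pre u g (g x) = x.
Proof. by move=> S C xu xv; apply: (ctr_fib S C xu xv); rewrite (preK _ C). Qed.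

Lemma pre_n (X : finType) (G w : xgraph X) u v g y :
  simple G -> @ctr X G w u v g -> y != g u -> (pre u g y != u) && (pre u g y != v).
Proof.
move=> S C; rewrite -{1}(preK y C) (ctr_m _ S C) negb_or.
by [].
Qed.

Definition fmap (X : finType) (G H w : xgraph X) (u v : 'I_(nv G)) (u' v' : 'I_(nv H))
  (g : 'I_(nv G) -> 'I_(nv w)) (h : 'I_(nv H) -> 'I_(nv w)) x :=
  if x == u then u' else if x == v then v' else pre u' h (g x).

Lemma fmap_n (X : finType) (G H w : xgraph X) u v u' v' g h x :
  simple G -> simple H -> @ctr X G w u v g -> @ctr X H w u' v' h -> h u' = g u ->
  x != u -> x != v ->
  [/\ fmap u v u' v' g h x = pre u' h (g x), pre u' h (g x) != u', pre u' h (g x) != v'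
    & h (pre u' h (g x)) = g x].
Proof.
move=> SG SH CG CH E xu xv; rewrite /fmap (negbTE xu) (negbTE xv).
have := @pre_n _ _ _ _ _ _ (g x) SH CH; rewrite E (ctr_ne SG CG xu xv) => /(_ isT) /andP[-> ->].
by rewrite (preK _ CH).
Qed.

Lemma fmapK (X : finType) (G H w : xgraph X) u v u' v' g h :
  simple G -> simple H -> @ctr X G w u v g -> @ctr X H w u' v' h -> h u' = g u ->
  cancel (fmap u v u' v' g h) (fmap u' v' u v h g).
Proof.
move=> SG SH CG CH E x.
case: (eqVneq x u) => [->|xu]; first by rewrite /fmap !eqxx.
case: (eqVneq x v) => [->|xv].
  by rewrite /fmap [v == u]eq_sym (negbTE (ctr_uv SG CG)) eqxx [v' == u']eq_sym (negbTE (ctr_uv SH CH)) eqxx.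
have [-> n1 n2 e] := fmap_n SG SH CG CH E xu xv.
by rewrite /fmap (negbTE n1) (negbTE n2) e (gK SG CG xu xv).
Qed.

Lemma recon (X : finType) (G H w : xgraph X) u v g u' v' h :
  simple G -> simple H -> @ctr X G w u v g -> @ctr X H w u' v' h -> h u' = g u ->
  (forall x y, x != u -> x != v -> h y = g x -> adj G u x = adj H u' y) ->
  (forall x y, x != u -> x != v -> h y = g x -> adj G v x = adj H v' y) ->
  (forall a, (lab G a == u) = (lab H a == u')) ->
  (forall a, (lab G a == v) = (lab H a == v')) ->
  iso G H.
Proof.
move=> SG SH CG CH E H1 H2 L1 L2.
exists (fmap u v u' v' g h); split.
  by exists (fmap u' v' u v h g); apply: fmapK.
have uv := ctr_uv SG CG; have uv' := ctr_uv SH CH.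
have [auv _ _ _ _] := CG; have [auv' _ _ _ _] := CH.
have vu : (v == u) = false by rewrite eq_sym (negbTE uv).
split.
  have key : forall y, y != u -> y != v ->
     adj H u' (fmap u v u' v' g h y) = adj G u y /\ adj H v' (fmap u v u' v' g h y) = adj G v y.
    move=> y yu yv; have [-> _ _ e] := fmap_n SG SH CG CH E yu yv.
    by rewrite (H1 y _ yu yv e) (H2 y _ yu yv e).
  move=> x y.
  case: (eqVneq x u) => [->|xu].
    case: (eqVneq y u) => [->|yu]; first by rewrite !s_irr.
    case: (eqVneq y v) => [->|yv]; first by rewrite /fmap !eqxx vu /= auv auv'.
    by rewrite {1}/fmap eqxx; case: (key y yu yv).
  case: (eqVneq x v) => [->|xv].
    case: (eqVneq y u) => [->|yu].
      by rewrite /fmap !eqxx vu /= s_sym // auv' (s_sym SG) auv.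
    case: (eqVneq y v) => [->|yv]; first by rewrite !s_irr.
    by rewrite {1}/fmap vu eqxx; case: (key y yu yv).
  case: (eqVneq y u) => [->|yu].
    by rewrite {2}/fmap eqxx s_sym // (s_sym SG x); case: (key x xu xv).
  case: (eqVneq y v) => [->|yv].
    by rewrite {2}/fmap vu eqxx s_sym // (s_sym SG x); case: (key x xu xv).
  have [-> n1 n2 e1] := fmap_n SG SH CG CH E xu xv.
  have [-> m1 m2 e2] := fmap_n SG SH CG CH E yu yv.
  by rewrite -(ctr_adjN SH CH n1 n2 m1 m2) e1 e2 (ctr_adjN SG CG).
move=> a.
case: (eqVneq (lab G a) u) => [e|au].
  by rewrite e /fmap eqxx; apply/esym/eqP; rewrite -L1 e.
case: (eqVneq (lab G a) v) => [e|av].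
  by rewrite e /fmap eqxx vu; apply/esym/eqP; rewrite -L2 e.
have [-> _ _ _] := fmap_n SG SH CG CH E au av.
have au' : lab H a != u' by rewrite -L1.
have av' : lab H a != v' by rewrite -L2.
have [_ _ _ _ lw] := CG; have [_ _ _ _ lw'] := CH.
by rewrite -lw lw' (gK SH CH au' av').
Qed.

Lemma nni_simple (X : finType) (G : xgraph X) u v b c :
  simple G -> u != c -> v != b -> simple (nni_graph G u v b c).
Proof.
move=> S uc vb; split.
  move=> x; rewrite /= s_irr //=; apply/negP; case/orP; rewrite /upair =>
    /orP[] /andP[/eqP e1 /eqP e2]; [move: uc|move: uc|move: vb|move: vb];
    by rewrite -e1 -e2 eqxx.
move=> x y /=; rewrite (s_sym S x y) (upairC x y u b) (upairC x y v c) (upairC x y u c) (upairC x y v b).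
done.
Qed.

Lemma nni_adjU (X : finType) (G : xgraph X) u v b c x :
  u != v -> x != u -> x != v ->
  adj (nni_graph G u v b c) u x = (adj G u x && (x != b)) || (x == c).
Proof.
move=> uv xu xv; rewrite /= /upair !eqxx /= (negbTE uv) /= (negbTE xv) !andbF !orbF /=.
by rewrite (negbTE xu) !andbF !orbF andbT.
Qed.

Lemma nni_adjV (X : finType) (G : xgraph X) u v b c x :
  u != v -> x != u -> x != v ->
  adj (nni_graph G u v b c) v x = (adj G v x && (x != c)) || (x == b).
Proof.
move=> uv xu xv; have vu : (v == u) = false by rewrite eq_sym (negbTE uv).
rewrite /= /upair !eqxx /= vu /=.
by rewrite (negbTE xu) (negbTE xv); move: (adj G v x) (x == c) (x == b) (v == c) (v == b) => [] [] [] [] [].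
Qed.

Lemma nni_ctr (X : finType) (G w : xgraph X) u v g b c :
  simple G -> @ctr X G w u v g -> adj G u b -> b != v -> adj G v c -> c != u ->
  @ctr X (nni_graph G u v b c) w u v g.
Proof.
move=> S C ub bv vc cu; have C' := C; case: C' => uv Su F A L.
have uvn := ctr_uv S C; have gvu := ctr_vu S C.
split => //.
- rewrite /= uv /upair eqxx /= [v == b]eq_sym (negbTE bv) /= (negbTE uvn) /=.
  by rewrite [v == u]eq_sym (negbTE uvn) [u == c]eq_sym (negbTE cu) !andbF.
- move=> a b0; split => [/A|] [ab [a0 [b1 [ea eb E]]]]; [split => //|apply/A; split => //].
    case N: (adj (nni_graph G u v b c) a0 b1); first by exists a0, b1.
    move: N; rewrite /= E /= orbC => /negbT; rewrite !negb_or => /andP[_ /andP[]].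
    move=> H _; have : [|| (a0 == u) && (b1 == b), (a0 == b) && (b1 == u), (a0 == v) && (b1 == c) | (a0 == c) && (b1 == v)].
      by move: H; case: ((a0 == u) && (b1 == b)); case: ((a0 == b) && (b1 == u)); case: ((a0 == v) && (b1 == c)); case: ((a0 == c) && (b1 == v)).
    case/or4P => /andP[/eqP e1 /eqP e2]; subst a0 b1.
    + by exists v, b; rewrite gvu /= /upair !eqxx !orbT.
    + by exists b, v; rewrite gvu /= /upair !eqxx !orbT.
    + by exists u, c; rewrite -gvu /= /upair !eqxx !orbT.
    + by exists c, u; rewrite -gvu /= /upair !eqxx !orbT.
  move: E => /= /orP[/orP[/andP[/andP[E _] _]|]|]; first by exists a0, b1.
    rewrite /upair => /orP[] /andP[/eqP e1 /eqP e2]; subst a0 b1.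
      by exists v, c; rewrite gvu.
    by exists c, v; rewrite gvu // s_sym.
  rewrite /upair => /orP[] /andP[/eqP e1 /eqP e2]; subst a0 b1.
    by exists u, b; rewrite -gvu.
  by exists b, u; rewrite -gvu // s_sym.
Qed.

Lemma upair_inj n m (f : 'I_n -> 'I_m) (x y a b : 'I_n) : injective f ->
  upair (f x) (f y) (f a) (f b) = upair x y a b.
Proof. by move=> fi; rewrite /upair !(inj_eq fi). Qed.

Lemma ctr_iso (X : finType) (G H w : xgraph X) u v g :
  @ctr X G w u v g -> iso G H -> exists u' v' h, @ctr X H w u' v' h.
Proof.
move=> [uv Su F A L] [f [[f' fK f'K] [Af Lf]]].
exists (f u), (f v), (fun y => g (f' y)); split.
- by rewrite Af.
- by move=> y; have [x <-] := Su y; exists (f x); rewrite fK.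
- have fi := can_inj fK.
  move=> x y; split => [/F [E|E]|[E|E]]; [left| right| apply/F; left | apply/F; right].
  + by rewrite -(f'K x) E f'K.
  + by rewrite -[x]f'K -[y]f'K upair_inj.
  + by rewrite E.
  + by rewrite -(upair_inj _ _ _ _ fi) !f'K.
- move=> a b; split => [/A|] [ab [a0 [b0 [ea eb E]]]]; [split => //|apply/A; split => //].
    by exists (f a0), (f b0); rewrite !fK Af.
  by exists (f' a0), (f' b0); rewrite -Af !f'K.
- by move=> x; rewrite L -Lf fK.
Qed.

Lemma deg_ge (X : finType) (H : xgraph X) y (s : seq 'I_(nv H)) :
  uniq s -> (forall z, z \in s -> adj H y z) -> size s <= deg H y.
Proof.
move=> U A; rewrite /deg -(card_uniqP U); apply: subset_leq_card.
by apply/subsetP => z zs; rewrite inE; apply: A.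
Qed.

Lemma deg_img (X : finType) (G w : xgraph X) u v g z :
  simple G -> @ctr X G w u v g -> z != u -> z != v -> deg w (g z) <= deg G z.
Proof.
move=> S C zu zv; have [_ _ _ A _] := C; rewrite /deg.
apply: leq_trans (leq_imset_card g _); apply: subset_leq_card; apply/subsetP => y.
rewrite inE => /A [_ [a0 [b0 [ea eb ab]]]].
by apply/imsetP; exists b0; rewrite // inE -(ctr_fib S C zu zv ea).
Qed.

Lemma ctr_swap (X : finType) (G w : xgraph X) u v g :
  simple G -> @ctr X G w u v g -> @ctr X G w v u g.
Proof.
move=> S [uv Su F A L]; split => //; first by rewrite s_sym.
move=> x y; have -> : upair x y v u = upair x y u v by rewrite /upair orbC.
by apply: F.
Qed.

Definition Sp (X : finType) (w : xgraph X) y :=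
  (~ labeled w y /\ 4 <= deg w y) \/ (labeled w y /\ 2 <= deg w y) \/
  (exists a b, a != b /\ lab w a = y /\ lab w b = y).
Arguments Sp {X} w y.

Lemma sp_m1 (X : finType) (G w : xgraph X) u v g :
  in_CX G -> @ctr X G w u v g -> labeled G u -> ~ labeled G v -> Sp w (g u).
Proof.
move=> CX C [a ea] Lv; have S := cx_simple CX; have C' := C; case: C' => uv _ _ _ L.
right; left; split; first by exists a; rewrite L ea.
have [c1 [c2 [[c12 c1u c2u vc1 vc2] _]]] := cx_unl CX Lv (etrans (s_sym S v u) uv).
have c1v := s_neq S vc1; have c2v := s_neq S vc2.
rewrite eq_sym in c1v; rewrite eq_sym in c2v.
have -> : 2 = size [:: g c1; g c2] by [].
apply: deg_ge.
  rewrite /= inE andbT; apply/eqP => /(ctr_fib S C c2u c2v) E.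
  by move: c12; rewrite E eqxx.
by move=> z; rewrite !inE => /orP[]/eqP->; rewrite (ctr_adjM S C) // ?vc1 ?vc2 orbT.
Qed.

Lemma sp_m (X : finType) (G w : xgraph X) u v g :
  in_CX G -> @ctr X G w u v g -> Sp w (g u).
Proof.
move=> CX C; have S := cx_simple CX; have C' := C; case: C' => uv _ _ _ L.
have uvn := ctr_uv S C.
case: (labeledP u) => Lu; case: (labeledP v) => Lv.
- right; right; case: Lu => a ea; case: Lv => b eb; exists a, b; split.
    by apply/eqP => E; move: uvn; rewrite -ea -eb E eqxx.
  by rewrite !L ea eb (ctr_vu S C).
- exact: sp_m1 CX C Lu Lv.
- by rewrite -(ctr_vu S C); apply: sp_m1 CX (ctr_swap S C) Lv Lu.
left; split.
  case=> a; rewrite L => /eqP; rewrite (ctr_m _ S C) => /orP[]/eqP E.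
    by apply: Lu; exists a.
  by apply: Lv; exists a.
have [a1 [a2 [[a12 a1v a2v ua1 ua2] _]]] := cx_unl CX Lu uv.
have [c1 [c2 [[c12 c1u c2u vc1 vc2] _]]] := cx_unl CX Lv (etrans (s_sym S v u) uv).
have a1u : a1 != u by rewrite eq_sym (s_neq S ua1).
have a2u : a2 != u by rewrite eq_sym (s_neq S ua2).
have c1v : c1 != v by rewrite eq_sym (s_neq S vc1).
have c2v : c2 != v by rewrite eq_sym (s_neq S vc2).
have nt : forall a c, adj G u a -> adj G v c -> a != c.
  move=> a c ua vc; apply/eqP => E; subst c.
  by apply: (no_tri S (cx_acyclic CX) uv vc ua).
have inj : forall x y, x != u -> x != v -> y != u -> y != v -> x != y -> g x != g y.
  by move=> x y xu xv yu yv; apply: contra => /eqP/esym/(ctr_fib S C xu xv) ->.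
have -> : 4 = size [:: g a1; g a2; g c1; g c2] by [].
apply: deg_ge.
  rewrite /= !inE !negb_or !inj //; try by apply: nt.
by move=> z; rewrite !inE => /or4P[]/eqP->; rewrite (ctr_adjM S C) // ?ua1 ?ua2 ?vc1 ?vc2 ?orbT.
Qed.

Lemma sp_n (X : finType) (G w : xgraph X) u v g z :
  in_CX G -> @ctr X G w u v g -> z != u -> z != v -> ~ Sp w (g z).
Proof.
move=> CX C zu zv; have S := cx_simple CX; have C' := C; case: C' => uv _ _ _ L.
have D := deg_img S C zu zv.
have LE : labeled w (g z) <-> labeled G z.
  by split => -[a ea]; exists a; [apply/eqP; rewrite -(ctr_labN _ S C zu zv) ea| rewrite L ea].
have [_ [inj [LD UD]]] := CX.
case=> [[nl d4]|[[l d2]|[a [b [ab [ea eb]]]]]].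
- have E := UD z (fun l => nl (proj2 LE l)); move: (leq_trans d4 D); by rewrite E.
- have := proj1 (LD z) (proj1 LE l) => d1; move: (leq_trans d2 (leq_trans D d1)); by [].
- move: ab; rewrite (inj a b) ?eqxx //.
  have := ctr_labN a S C zu zv; rewrite ea eqxx => /esym/eqP ->.
  by have := ctr_labN b S C zu zv; rewrite eb eqxx => /esym/eqP ->.
Qed.

Lemma merged (X : finType) (G H w : xgraph X) u v g u' v' h :
  in_CX G -> in_CX H -> @ctr X G w u v g -> @ctr X H w u' v' h -> h u' = g u.
Proof.
move=> CG CH C D; have SH := cx_simple CH.
apply/eqP; apply/negPn/negP => ne.
have ne' : g u != h u' by rewrite eq_sym.
have /andP[z1 z2] := @pre_n _ _ _ _ _ _ (g u) SH D ne'.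
have := sp_m CG C; rewrite -(preK (g u) D).
by apply: sp_n CH D z1 z2.
Qed.

Lemma normal_of (X : finType) (G H w : xgraph X) u v g u' v' h x y :
  simple G -> simple H -> @ctr X G w u v g -> @ctr X H w u' v' h -> h u' = g u ->
  x != u -> x != v -> h y = g x -> (y != u') && (y != v').
Proof.
move=> SG SH CG CH E xu xv e; rewrite -negb_or -(ctr_m _ SH CH) e E.
exact: ctr_ne SG CG xu xv.
Qed.

Lemma H2_of (X : finType) (G H w : xgraph X) u v g u' v' h :
  simple G -> simple H -> @ctr X G w u v g -> @ctr X H w u' v' h -> h u' = g u ->
  (forall x, adj G u x -> adj G v x -> False) -> (forall y, adj H u' y -> adj H v' y -> False) ->
  (forall x y, x != u -> x != v -> h y = g x -> adj G u x = adj H u' y) ->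
  (forall x y, x != u -> x != v -> h y = g x -> adj G v x = adj H v' y).
Proof.
move=> SG SH CG CH E ncG ncH H1 x y xu xv e.
have /andP[yu yv] := normal_of SG SH CG CH E xu xv e.
have e1 := ctr_adjM SG CG xu xv; have e2 := ctr_adjM SH CH yu yv.
have Hu := H1 x y xu xv e.
rewrite E e e1 Hu in e2.
case A: (adj H u' y) e2 => /= e2; last by [].
have B : adj G u x by rewrite Hu.
case: (boolP (adj G v x)) => [C|_]; first by case: (ncG _ B C).
case: (boolP (adj H v' y)) => [C|_]; first by case: (ncH _ A C).
done.
Qed.

Lemma leaf_side (X : finType) (G w : xgraph X) u v g x :
  in_CX G -> @ctr X G w u v g -> labeled G u -> x != v -> adj G u x = false.
Proof.
move=> CX C Lu xv; have [uv _ _ _ _] := C; apply/negP => ux.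
by move: xv; rewrite (cx_leaf CX Lu ux uv) eqxx.
Qed.

Lemma lab_case (X : finType) (G H w : xgraph X) u v g u' v' h a :
  in_CX G -> in_CX H -> @ctr X G w u v g -> @ctr X H w u' v' h -> h u' = g u ->
  lab G a = u -> lab H a = u' -> iso G H.
Proof.
move=> XG XH CG CH E ea ea'.
have SG := cx_simple XG; have SH := cx_simple XH.
have LG : labeled G u by exists a.
have LH : labeled H u' by exists a.
have H1 : forall x y, x != u -> x != v -> h y = g x -> adj G u x = adj H u' y.
  move=> x y xu xv e; have /andP[yu yv] := normal_of SG SH CG CH E xu xv e.
  by rewrite (leaf_side XG CG LG xv) (leaf_side XH CH LH yv).
apply: (recon SG SH CG CH E H1).
- apply: (H2_of SG SH CG CH E _ _ H1).
    move=> x ux vx; have [uv _ _ _ _] := CG; have := cx_leaf XG LG ux uv.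
    by move=> e; move: vx; rewrite e s_irr.
  move=> x ux vx; have [uv _ _ _ _] := CH; have := cx_leaf XH LH ux uv.
  by move=> e; move: vx; rewrite e s_irr.
- have [_ [iG _]] := XG; have [_ [iH _]] := XH.
  by move=> b; rewrite -{1}ea -{1}ea' !(inj_eq iG) (inj_eq iH).
- have [_ [iG _]] := XG; have [_ [iH _]] := XH.
  have uv := ctr_uv SG CG; have uv' := ctr_uv SH CH.
  move=> b; have e1 := ctr_labM b SG CG; have e2 := ctr_labM b SH CH.
  rewrite -E in e1; rewrite e1 in e2.
  move: e2; rewrite -{1}ea -{1}ea' !(inj_eq iG) !(inj_eq iH).
  case: (eqVneq b a) => [->|_] /=; last by [].
  by rewrite ea ea' (negbTE uv) (negbTE uv').
Qed.

Lemma ctr_injN (X : finType) (G w : xgraph X) u v g x y :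
  simple G -> @ctr X G w u v g -> x != u -> x != v -> y != u -> y != v ->
  (g x == g y) = (x == y).
Proof.
move=> S C xu xv yu yv; apply/eqP/eqP => [e|->] //.
exact: (ctr_fib S C yu yv e).
Qed.

Lemma side_set (X : finType) (G w : xgraph X) u v g (p q : 'I_(nv G)) :
  simple G -> @ctr X G w u v g -> p != u -> p != v -> q != u -> q != v ->
  (forall x, x != u -> x != v -> adj G u x = (x == p) || (x == q)) ->
  forall x, x != u -> x != v -> adj G u x = (g x \in [set g p; g q]).
Proof.
move=> S C pu pv qu qv A x xu xv.
by rewrite !inE !(ctr_injN S C) // A.
Qed.

Lemma H1_of (X : finType) (G H w : xgraph X) u v g u' v' h (Z : {set 'I_(nv w)}) :
  simple G -> simple H -> @ctr X G w u v g -> @ctr X H w u' v' h -> h u' = g u ->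
  (forall x, x != u -> x != v -> adj G u x = (g x \in Z)) ->
  (forall y, y != u' -> y != v' -> adj H u' y = (h y \in Z)) ->
  (forall x y, x != u -> x != v -> h y = g x -> adj G u x = adj H u' y).
Proof.
move=> SG SH CG CH E A B x y xu xv e.
have /andP[yu yv] := normal_of SG SH CG CH E xu xv e.
by rewrite A // B // e.
Qed.

Ltac pick6 := first [ left; first [reflexivity | apply: setUC] | right; pick6 | first [reflexivity | apply: setUC] ].

Lemma comb (T : finType) (a1 a2 c1 c2 b1 b2 : T) : b1 != b2 ->
  b1 \in [set a1; a2; c1; c2] -> b2 \in [set a1; a2; c1; c2] ->
  [set b1; b2] = [set a1; a2] \/ [set b1; b2] = [set c1; c2] \/
  [set b1; b2] = [set a1; c1] \/ [set b1; b2] = [set a1; c2] \/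
  [set b1; b2] = [set a2; c1] \/ [set b1; b2] = [set a2; c2].
Proof.
rewrite !inE => n /orP[/orP[/orP[]|]|]/eqP E1 /orP[/orP[/orP[]|]|]/eqP E2; subst b1 b2;
  try (by rewrite eqxx in n); pick6.
Qed.

Lemma memb (X : finType) (G H w : xgraph X) u v g u' v' h a1 a2 c1 c2 y :
  simple G -> simple H -> @ctr X G w u v g -> @ctr X H w u' v' h -> h u' = g u ->
  (forall z, adj G u z -> [\/ z = v, z = a1 | z = a2]) ->
  (forall z, adj G v z -> [\/ z = u, z = c1 | z = c2]) ->
  y != u' -> y != v' -> adj H u' y || adj H v' y -> h y \in [set g a1; g a2; g c1; g c2].
Proof.
move=> SG SH CG CH E Au Av yu yv A.
have hy : h y != g u by rewrite -E (ctr_ne SH CH yu yv).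
have /andP[xu xv] := pre_n SG CG hy.
have ex := preK (h y) CG; set x := pre u g (h y) in xu xv ex.
have := ctr_adjM SG CG xu xv; rewrite ex -E (ctr_adjM SH CH yu yv) A => /esym/orP[] /[dup] B.
  by case/Au => e; [move: xv| |]; rewrite ?e ?eqxx // -ex e !inE eqxx ?orbT.
by case/Av => e; [move: xu| |]; rewrite ?e ?eqxx // -ex e !inE eqxx ?orbT.
Qed.

Lemma mixed (X : finType) (G H w : xgraph X) u v g u' v' h p q r s :
  in_CX G -> in_CX H -> @ctr X G w u v g -> @ctr X H w u' v' h -> h u' = g u ->
  ~ labeled G u -> ~ labeled G v -> (forall b, lab H b != u') -> (forall b, lab H b != v') ->
  p != q -> r != s -> adj G u p -> adj G u q -> adj G v r -> adj G v s ->
  p != v -> q != v -> r != u -> s != u ->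
  (forall x, x != u -> x != v -> adj G u x = (x == p) || (x == q)) ->
  (forall x, x != u -> x != v -> adj G v x = (x == r) || (x == s)) ->
  (forall y, y != u' -> y != v' -> adj H u' y = (h y \in [set g p; g r])) ->
  NNI G H.
Proof.
move=> XG XH CG CH E Lu Lv LHu LHv pq rs up uq vr vs pv qv ru su Au Av AH.
have SG := cx_simple XG; have SH := cx_simple XH; have AG := cx_acyclic XG.
have uvn := ctr_uv SG CG; have [uv _ _ _ _] := CG.
have pu : p != u by rewrite eq_sym (s_neq SG up).
have qu : q != u by rewrite eq_sym (s_neq SG uq).
have rv : r != v by rewrite eq_sym (s_neq SG vr).
have sv : s != v by rewrite eq_sym (s_neq SG vs).
have nt : forall a c, adj G u a -> adj G v c -> a != c.
  move=> a c ua vc; apply/eqP => e; subst c.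
  by apply: (no_tri SG AG uv vc ua).
have ps := nt _ _ up vs; have qr := nt _ _ uq vr.
have pr := nt _ _ up vr; have qs := nt _ _ uq vs.
set G' := nni_graph G u v q r.
have CG' : @ctr X G' w u v g by apply: nni_ctr.
have SG' : simple G' by apply: nni_simple; rewrite // eq_sym.
have A'u : forall x, x != u -> x != v -> adj G' u x = (g x \in [set g p; g r]).
  apply: side_set SG' CG' pu pv ru rv _ => x xu xv.
  rewrite /G' nni_adjU // Au //.
  have : (x == p) && (x == q) = false.
    by apply/negP => /andP[/eqP e1 /eqP e2]; move: pq; rewrite -e1 -e2 eqxx.
  by move: (x == p) (x == q) (x == r) => [] [] [].
have A'v : forall x, x != u -> x != v -> adj G' v x = (x == s) || (x == q).
  move=> x xu xv; rewrite /G' nni_adjV // Av //.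
  have : (x == r) && (x == s) = false.
    by apply/negP => /andP[/eqP e1 /eqP e2]; move: rs; rewrite -e1 -e2 eqxx.
  by move: (x == r) (x == s) (x == q) => [] [] [].
have ncG : forall x, adj G' u x -> adj G' v x -> False.
  move=> x; case: (eqVneq x u) => [->|xu]; first by rewrite s_irr.
  case: (eqVneq x v) => [->|xv]; first by rewrite (s_irr SG' v).
  rewrite A'u // A'v // !inE !(ctr_injN SG CG) //.
  case/orP => /eqP -> /orP[]/eqP e.
  - by move: ps; rewrite e eqxx.
  - by move: pq; rewrite e eqxx.
  - by move: rs; rewrite e eqxx.
  - by move: qr; rewrite e eqxx.
have ncH : forall y, adj H u' y -> adj H v' y -> False.
  have [uv' _ _ _ _] := CH.
  by move=> y uy vy; apply: (no_tri SH (cx_acyclic XH) uv' vy uy).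
have H1 := H1_of SG' SH CG' CH E A'u AH.
have H2 := H2_of SG' SH CG' CH E ncG ncH H1.
have L1 : forall b, (lab G' b == u) = (lab H b == u').
  move=> b; rewrite (negbTE (LHu b)); apply/negP => /eqP e; apply: Lu; by exists b.
have L2 : forall b, (lab G' b == v) = (lab H b == v').
  move=> b; rewrite (negbTE (LHv b)); apply/negP => /eqP e; apply: Lv; by exists b.
exists u, v, q, r; split => //; split => //; split => //.
exact: (recon SG' SH CG' CH E H1 H2 L1 L2).
Qed.

Lemma char_side (X : finType) (G : xgraph X) u v a1 a2 :
  adj G u a1 -> adj G u a2 ->
  (forall z, adj G u z -> [\/ z = v, z = a1 | z = a2]) ->
  forall x, x != v -> adj G u x = (x == a1) || (x == a2).
Proof.
move=> u1 u2 A x xv; apply/idP/idP.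
  case/A => e; subst x; first by rewrite eqxx in xv.
    by rewrite eqxx.
  by rewrite eqxx orbT.
by case/orP => /eqP ->.
Qed.

Lemma main_ctr (X : finType) (G K w : xgraph X) u v g u' v' h :
  in_CX G -> in_CX K -> @ctr X G w u v g -> @ctr X K w u' v' h -> ~ iso G K -> NNI G K.
Proof.
move=> XG XK CG CK NI.
have SG := cx_simple XG; have SK := cx_simple XK.
have LC : forall u0 v0 g0 u1 v1 h0 a, @ctr X G w u0 v0 g0 -> @ctr X K w u1 v1 h0 ->
    lab G a = u0 -> False.
  move=> u0 v0 g0 u1 v1 h0 a C0 D0 ea.
  have E := merged XG XK C0 D0.
  have := ctr_labM a SK D0; rewrite E.
  have [_ _ _ _ ->] := C0; rewrite ea eqxx => /esym/orP[]/eqP e.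
    by apply: NI; apply: (lab_case XG XK C0 D0 E ea e).
  apply: NI; apply: (lab_case XG XK C0 (ctr_swap SK D0) _ ea e).
  by rewrite (ctr_vu SK D0).
case: (labeledP u) => [[a ea]|Lu]; first by case: (LC _ _ _ _ _ _ a CG CK ea).
case: (labeledP v) => [[a ea]|Lv]; first by case: (LC _ _ _ _ _ _ a (ctr_swap SG CG) CK ea).
have E := merged XG XK CG CK.
have LKu : forall b, lab K b != u'.
  move=> b; apply/eqP => e; have := ctr_labM b SG CG.
  have [_ _ _ _ lw] := CK; rewrite -E lw e eqxx => /esym/orP[]/eqP e'.
    by apply: Lu; exists b.
  by apply: Lv; exists b.
have LKv : forall b, lab K b != v'.
  move=> b; apply/eqP => e; have := ctr_labM b SG CG.
  have [_ _ _ _ lw] := CK; rewrite -E -(ctr_vu SK CK) lw e eqxx => /esym/orP[]/eqP e'.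
    by apply: Lu; exists b.
  by apply: Lv; exists b.
have LKu' : ~ labeled K u' by case=> b /eqP; apply/negP.
have LKv' : ~ labeled K v' by case=> b /eqP; apply/negP.
have [uv _ _ _ _] := CG; have [uv' _ _ _ _] := CK.
have vu : adj G v u by rewrite s_sym.
have vu' : adj K v' u' by rewrite s_sym.
have [a1 [a2 [[a12 a1v a2v ua1 ua2] Au0]]] := cx_unl XG Lu uv.
have [c1 [c2 [[c12 c1u c2u vc1 vc2] Av0]]] := cx_unl XG Lv vu.
have [b1 [b2 [[b12 b1v b2v ub1 ub2] Bu0]]] := cx_unl XK LKu' uv'.
have [d1 [d2 [[d12 d1u d2u vd1 vd2] Bv0]]] := cx_unl XK LKv' vu'.
have a1u : a1 != u by rewrite eq_sym (s_neq SG ua1).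
have a2u : a2 != u by rewrite eq_sym (s_neq SG ua2).
have c1v : c1 != v by rewrite eq_sym (s_neq SG vc1).
have c2v : c2 != v by rewrite eq_sym (s_neq SG vc2).
have b1u : b1 != u' by rewrite eq_sym (s_neq SK ub1).
have b2u : b2 != u' by rewrite eq_sym (s_neq SK ub2).
have Au := char_side ua1 ua2 Au0.
have Av := char_side vc1 vc2 Av0.
have Bu := char_side ub1 ub2 Bu0.
have AK := side_set SK CK b1u b1v b2u b2v (fun x _ xv => Bu x xv).
have m1 := memb SG SK CG CK E Au0 Av0 b1u b1v (introT orP (or_introl ub1)).
have m2 := memb SG SK CG CK E Au0 Av0 b2u b2v (introT orP (or_introl ub2)).
have nb : h b1 != h b2 by rewrite (ctr_injN SK CK).
have ncG : forall x, adj G u x -> adj G v x -> False.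
  by move=> x ux vx; apply: (no_tri SG (cx_acyclic XG) uv vx ux).
have ncG' : forall x, adj G v x -> adj G u x -> False.
  by move=> x vx ux; apply: (ncG x ux vx).
have ncK : forall y, adj K u' y -> adj K v' y -> False.
  by move=> y uy vy; apply: (no_tri SK (cx_acyclic XK) uv' vy uy).
have nlG : forall b z, z = u \/ z = v -> (lab G b == z) = false.
  move=> b z [] -> ; apply/negP => /eqP e; [apply: Lu|apply: Lv]; by exists b.
have nlK : forall b, (lab K b == u') = false /\ (lab K b == v') = false.
  by move=> b; rewrite (negbTE (LKu b)) (negbTE (LKv b)).
case: (comb nb m1 m2) => [e|[e|[e|[e|[e|e]]]]].
- exfalso; apply: NI.
  have AK' : forall y, y != u' -> y != v' -> adj K u' y = (h y \in [set g a1; g a2]).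
    by move=> y yu yv; rewrite AK // e.
  have H1 := H1_of SG SK CG CK E (side_set SG CG a1u a1v a2u a2v (fun x _ xv => Au x xv)) AK'.
  have H2 := H2_of SG SK CG CK E ncG ncK H1.
  apply: (recon SG SK CG CK E H1 H2) => b; rewrite nlG ?(proj1 (nlK b)) ?(proj2 (nlK b)); auto.
- exfalso; apply: NI.
  have CG2 := ctr_swap SG CG.
  have E2 : h u' = g v by rewrite (ctr_vu SG CG).
  have AK' : forall y, y != u' -> y != v' -> adj K u' y = (h y \in [set g c1; g c2]).
    by move=> y yu yv; rewrite AK // e.
  have H1 := H1_of SG SK CG2 CK E2 (side_set SG CG2 c1v c1u c2v c2u (fun x _ xu => Av x xu)) AK'.
  have H2 := H2_of SG SK CG2 CK E2 ncG' ncK H1.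
  apply: (recon SG SK CG2 CK E2 H1 H2) => b; rewrite nlG ?(proj1 (nlK b)) ?(proj2 (nlK b)); auto.
- apply: (mixed XG XK CG CK E Lu Lv LKu LKv a12 c12 ua1 ua2 vc1 vc2 a1v a2v c1u c2u).
  + by move=> x _ xv; apply: Au.
  + by move=> x xu _; apply: Av.
  + by move=> y yu yv; rewrite AK // e.
- rewrite eq_sym in c12.
  apply: (mixed XG XK CG CK E Lu Lv LKu LKv a12 c12 ua1 ua2 vc2 vc1 a1v a2v c2u c1u).
  + by move=> x _ xv; apply: Au.
  + by move=> x xu _; rewrite orbC; apply: Av.
  + by move=> y yu yv; rewrite AK // e.
- rewrite eq_sym in a12.
  apply: (mixed XG XK CG CK E Lu Lv LKu LKv a12 c12 ua2 ua1 vc1 vc2 a2v a1v c1u c2u).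
  + by move=> x _ xv; rewrite orbC; apply: Au.
  + by move=> x xu _; apply: Av.
  + by move=> y yu yv; rewrite AK // e.
- rewrite eq_sym in a12; rewrite eq_sym in c12.
  apply: (mixed XG XK CG CK E Lu Lv LKu LKv a12 c12 ua2 ua1 vc2 vc1 a2v a1v c2u c1u).
  + by move=> x _ xv; rewrite orbC; apply: Au.
  + by move=> x xu _; rewrite orbC; apply: Av.
  + by move=> y yu yv; rewrite AK // e.
Qed.

Lemma tree_two (X : finType) (G : xgraph X) u v :
  is_tree G -> adj G u v ->
  (forall x y, adj G x y -> (x == u) || (x == v) -> (y == u) || (y == v)) ->
  forall x, (x == u) || (x == v).
Proof.
move=> [S [_ Cn]] uv Cl x.
have cl : closed (adj G) [pred z | (z == u) || (z == v)].
  move=> a b ab; rewrite !inE; apply/idP/idP; first exact: Cl.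
  by apply: Cl; rewrite s_sym.
by rewrite -[_ || _]/(x \in [pred z | (z == u) || (z == v)]) -(closed_connect cl (Cn u x)) inE eqxx.
Qed.

Lemma sd_data (X : finType) (G w : xgraph X) : in_CX G -> safe_deletion G w ->
  exists u v (g : 'I_(nv G) -> 'I_(nv w)), [/\ adj G u v, bijective g,
    forall x y, adj w (g x) (g y) = adj G x y && ~~ upair x y u v,
    forall x, lab w x = g (lab G x) &
    (forall x, (x == u) || (x == v)) /\ (forall x y, adj G x y = (x != y))].
Proof.
move=> CX [u [v [uv [Su [Sv [g [bg [A L]]]]]]]].
have S := cx_simple CX.
have lu : labeled G u.
  case: Su => // d; case: (labeledP u) => // nl; have [_ [_ [_ D]]] := CX.
  by move: d; rewrite (D u nl).
have lv : labeled G v.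
  case: Sv => // d; case: (labeledP v) => // nl; have [_ [_ [_ D]]] := CX.
  by move: d; rewrite (D v nl).
have lfu : forall z, adj G u z -> z = v by move=> z uz; apply: (cx_leaf CX lu uz uv).
have lfv : forall z, adj G v z -> z = u.
  by move=> z vz; apply: (cx_leaf CX lv vz); rewrite s_sym.
have two : forall x, (x == u) || (x == v).
  have [T _] := CX; apply: (tree_two T uv) => x y xy /orP[]/eqP ex; subst x.
    by rewrite (lfu y xy) eqxx orbT.
  by rewrite (lfv y xy) eqxx.
exists u, v, g; split => //; split => // x y.
have uvn := s_neq S uv.
apply/idP/idP => [/(s_neq S)//|xy].
move: (two x) (two y) xy => /orP[]/eqP-> /orP[]/eqP->; rewrite ?eqxx //.
by rewrite s_sym.
Qed.

Lemma sd_ctr (X : finType) (G H w : xgraph X) :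
  in_CX G -> in_CX H -> safe_deletion G w -> contraction H w -> False.
Proof.
move=> XG XH /(sd_data XG) [u [v [g [uv [g' gK g'K] A L [two Ad]]]]] /contractionP [u' [v' [h C]]].
have SG := cx_simple XG; have SH := cx_simple XH; have uvn := s_neq SG uv.
have noE : forall a b, adj w a b = false.
  move=> a b; rewrite -(g'K a) -(g'K b) A Ad /upair.
  by move: (two (g' a)) (two (g' b)) => /orP[]/eqP-> /orP[]/eqP->; rewrite !eqxx /= ?orbT /= ?andbF.
have Hedge : forall x y, adj H x y -> upair x y u' v'.
  move=> x y xy; apply/negPn/negP => np.
  have [_ _ F Aw _] := C.
  have : adj w (h x) (h y).
    apply/Aw; split; last by exists x, y.
    by move/F => [e|]; [move: xy; rewrite e s_irr | apply/negP].
  by rewrite noE.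
have [uv' Su F _ _] := C.
have two' : forall x, (x == u') || (x == v').
  have [T _] := XH; apply: (tree_two T uv') => x y /Hedge.
  by rewrite /upair => /orP[]/andP[_ ->]; rewrite ?orbT.
have hc : forall x, h x = h u'.
  by move=> x; move: (two' x) => /orP[]/eqP->; rewrite ?(ctr_vu SH C).
have [x1 e1] := Su (g u); have [x2 e2] := Su (g v).
move: uvn; rewrite -(gK u) -(gK v) -e1 -e2 !hc.
by rewrite eqxx.
Qed.

Lemma sd_sd (X : finType) (G H w : xgraph X) :
  in_CX G -> in_CX H -> safe_deletion G w -> safe_deletion H w -> iso G H.
Proof.
move=> XG XH /(sd_data XG) [u [v [g [uv [g' gK g'K] A L [two Ad]]]]]
  /(sd_data XH) [u' [v' [h [uv' [h' hK h'K] A' L' [two' Ad']]]]].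
exists (fun x => h' (g x)); split.
  by exists (fun y => g' (h y)) => x; rewrite ?h'K ?hK ?gK ?g'K.
split.
  by move=> x y; rewrite Ad Ad' (inj_eq (can_inj h'K)) (inj_eq (can_inj gK)).
by move=> a; rewrite -L L' hK.
Qed.

Lemma ctr_connect (X : finType) (G w : xgraph X) u v g x z :
  @ctr X G w u v g -> connect (adj G) x z -> connect (adj w) (g x) (g z).
Proof.
move=> [_ _ _ A _] /connectP [p Pp ->]; elim: p x Pp => [|y p IH] x /=; first by rewrite connect0.
case/andP => xy Pp; apply: connect_trans (IH y Pp).
case: (eqVneq (g x) (g y)) => [->|ne]; first exact: connect0.
apply: connect1; apply/A; split; [exact/eqP | by exists x, y].
Qed.

Lemma ctr_deg3 (X : finType) (G w : xgraph X) u v g y :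
  in_CX G -> @ctr X G w u v g -> ~ labeled w y -> 3 <= deg w y.
Proof.
move=> CX C nl; have S := cx_simple CX; have C' := C; have [uv _ _ A L] := C'.
case: (eqVneq y (g u)) nl => [->|ne] nl.
  case: (sp_m CX C) => [[_ d]|[[l _]|[a [b [_ [ea _]]]]]].
  - exact: leq_trans d.
  - by case: (nl l).
  - by case: nl; exists a.
have /andP[xu xv] := pre_n S C ne.
have ex := preK y C; set x := pre u g y in xu xv ex.
have nlx : ~ labeled G x.
  by case=> a ea; apply: nl; exists a; rewrite L ea.
have [_ [_ [_ D]]] := CX; have d3 := D x nlx.
have : 0 < #|[set t | adj G x t]| by rewrite -/(deg G x) d3.
case/card_gt0P => n1; rewrite inE => xn1.
have [n2 [n3 [[n23 n21 n31 xn2 xn3] _]]] := cx_unl CX nlx xn1.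
have adjw : forall n, adj G x n -> adj w (g x) (g n).
  move=> n xn; apply/A; split; last by exists x, n.
  move/esym/(ctr_fib S C xu xv) => e; by move: xn; rewrite e s_irr.
have nt : forall a b, adj G x a -> adj G x b -> a != b -> g a != g b.
  move=> a b xa xb ab; apply/eqP; have [_ _ F _ _] := C => /F [e|]; first by move/eqP: ab.
  rewrite /upair => /orP[]/andP[/eqP e1 /eqP e2]; subst a b.
    by apply: (no_tri S (cx_acyclic CX) uv (etrans (s_sym S v x) xb) (etrans (s_sym S u x) xa)).
  by apply: (no_tri S (cx_acyclic CX) uv (etrans (s_sym S v x) xa) (etrans (s_sym S u x) xb)).
rewrite -ex; have -> : 3 = size [:: g n1; g n2; g n3] by [].
apply: deg_ge.
  rewrite /= !inE !negb_or !nt //; by rewrite eq_sym.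
by move=> z; rewrite !inE => /or3P[]/eqP->; apply: adjw.
Qed.

Lemma cyc_close (X : finType) (G : xgraph X) a b x (Q : seq 'I_(nv G)) :
  simple G -> acyclic G -> adj G a b \/ a = b -> path (adj G) x Q -> uniq (x :: Q) ->
  a \notin x :: Q -> b \notin x :: Q -> 0 < size Q -> adj G a x -> adj G (last x Q) b -> False.
Proof.
move=> S A [ab|<-] P U na nb sQ ax lb.
  have ba : adj G b a by rewrite s_sym.
  have ne : a != b by apply: s_neq S ab.
  have U' : uniq (rcons (a :: x :: Q) b).
    by rewrite rcons_uniq cons_uniq U na andbT in_cons negb_or (eq_sym b a) ne nb.
  have sz : 2 < size (rcons (a :: x :: Q) b) by rewrite size_rcons /= ltnS ltnW.
  have := A _ U' sz; apply/negP/negPn.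
  rewrite rcons_cons rcons_cons /= rcons_path ax /=.
  by rewrite rcons_path P lb last_rcons ba.
have U' : uniq (a :: x :: Q) by rewrite cons_uniq na U.
have sz : 2 < size (a :: x :: Q) by rewrite /= !ltnS.
have := A _ U' sz; apply/negP/negPn.
by rewrite /= ax rcons_path P lb.
Qed.

Lemma ctr_acyclic (X : finType) (G w : xgraph X) u v g :
  simple G -> acyclic G -> @ctr X G w u v g -> acyclic w.
Proof.
move=> S AG C; have C' := C; have [uv _ _ _ _] := C'.
set m := g u.
have nrm : forall y, y != m -> (pre u g y != u) && (pre u g y != v) by move=> y; apply: pre_n.
have adjNN : forall y1 y2, y1 != m -> y2 != m -> adj w y1 y2 -> adj G (pre u g y1) (pre u g y2).
  move=> y1 y2 n1 n2; have /andP[a1 b1] := nrm _ n1; have /andP[a2 b2] := nrm _ n2.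
  by rewrite -(ctr_adjN S C a1 b1 a2 b2) !(preK _ C).
have adjM : forall y, y != m -> adj w m y -> adj G u (pre u g y) || adj G v (pre u g y).
  move=> y n; have /andP[a1 b1] := nrm _ n.
  by rewrite -(ctr_adjM S C a1 b1) (preK _ C).
have pinj : {in [pred y | y != m] &, injective (pre u g)}.
  by move=> y1 y2 _ _ e; rewrite -(preK y1 C) e (preK _ C).
have Sw := ctr_simple S C.
move=> s U sz; apply/negP => Cy.
case: (boolP (m \in s)) => ms; last first.
  have all_s : all [pred y | y != m] s by apply/allP => y ys; apply: contraNneq ms => <-.
  have := AG (map (pre u g) s).
  rewrite map_inj_in_uniq ?size_map //; last first.
    by move=> z1 z2 h1 h2; apply: pinj; [exact: (allP all_s _ h1)|exact: (allP all_s _ h2)].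
  move=> /(_ U sz); apply/negP/negPn; rewrite cycle_map.
  by apply: (sub_in_cycle _ all_s Cy) => y1 y2 n1 n2; apply: adjNN.
have := rot_index ms; set t := (drop _ _ ++ _) => Et.
have Ct : cycle (adj w) (m :: t) by rewrite -Et rot_cycle.
have Ut : uniq (m :: t) by rewrite -Et rot_uniq.
have St : 2 < size (m :: t) by rewrite -Et size_rot.
case: t Et Ct Ut St => [|y1 t'] // _.
rewrite /= rcons_path => /andP[my1 /andP[Pt lm]] /andP[mt Ut] St.
have all_t : all [pred y | y != m] (y1 :: t').
  by apply/allP => y ys; apply: contraNneq mt => <-.
have n1 : y1 != m by have := allP all_t y1; rewrite inE eqxx => /(_ isT).
have nk : last y1 t' != m by have := allP all_t (last y1 t'); rewrite mem_last => /(_ isT).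
have P : path (adj G) (pre u g y1) (map (pre u g) t').
  by rewrite path_map; apply: (sub_in_path _ all_t Pt) => a b na nb; apply: adjNN.
have Uq : uniq (pre u g y1 :: map (pre u g) t').
  rewrite -map_cons map_inj_in_uniq // => z1 z2 h1 h2.
  by apply: pinj; [exact: (allP all_t _ h1)|exact: (allP all_t _ h2)].
have nm : forall z, z = u \/ z = v -> z \notin pre u g y1 :: map (pre u g) t'.
  move=> z hz; apply/negP; rewrite -map_cons => /mapP [y yt ez].
  have := nrm y (allP all_t y yt); rewrite -ez.
  by case: hz => ->; rewrite eqxx ?andbF.
have sQ : 0 < size (map (pre u g) t') by rewrite size_map; move: St; rewrite /= !ltnS.
have a1 := adjM _ n1 my1.
have ak : adj G u (pre u g (last y1 t')) || adj G v (pre u g (last y1 t')).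
  by apply: adjM nk _; rewrite (s_sym Sw).
rewrite -last_map in ak.
have vu : adj G v u by rewrite s_sym.
case/orP: a1 => a1; case/orP: ak => ak.
- by apply: (cyc_close S AG (or_intror erefl) P Uq (nm u (or_introl erefl)) (nm u (or_introl erefl)) sQ a1 (etrans (s_sym S _ _) ak)).
- by apply: (cyc_close S AG (or_introl uv) P Uq (nm u (or_introl erefl)) (nm v (or_intror erefl)) sQ a1 (etrans (s_sym S _ _) ak)).
- by apply: (cyc_close S AG (or_introl vu) P Uq (nm v (or_intror erefl)) (nm u (or_introl erefl)) sQ a1 (etrans (s_sym S _ _) ak)).
- by apply: (cyc_close S AG (or_intror erefl) P Uq (nm v (or_intror erefl)) (nm v (or_intror erefl)) sQ a1 (etrans (s_sym S _ _) ak)).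
Qed.

Lemma walk (X : finType) (G : xgraph X) : simple G -> acyclic G -> (forall x, 2 <= deg G x) ->
  forall k e p, path (adj G) e p -> uniq (e :: p) -> nv G - size (e :: p) <= k -> False.
Proof.
move=> S A D; elim=> [|k IH] e p P U Sz.
all: have : 0 < #|[set t | adj G e t] :\ head e p|
  by move: (D e); rewrite /deg (cardsD1 (head e p)); case: (_ \in _) => /=; lia.
all: case/card_gt0P => y; rewrite !inE => /andP[yh ey].
all: case: (boolP (y \in e :: p)) => yin.
1,3: rewrite in_cons [y == e]eq_sym (negbTE (s_neq S ey)) /= in yin;
  case/splitPr: yin P U yh => p1 p2 P U yh;
  have U' : uniq (e :: rcons p1 y) by
    move: U; rewrite -cats1 -cat_cons -[y :: p2]cat1s catA cat_uniq => /andP[].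
all: try (have sz : 2 < size (e :: rcons p1 y) by
    (move: yh; rewrite /= size_rcons; case: p1 {P U U'} => [|z q] //=; rewrite eqxx)).
all: try (have := A _ U' sz; apply/negP/negPn;
    rewrite /= rcons_path last_rcons (s_sym S y e) ey andbT;
    by move: P; rewrite cat_path rcons_path /= => /andP[-> /andP[-> _]]).
- have : uniq (y :: e :: p) by rewrite cons_uniq yin U.
  move/card_uniqP; have := max_card (mem (y :: e :: p)); rewrite card_ord /= => le e'.
  by move: le Sz; rewrite e' /=; lia.
- apply: (IH y (e :: p)); first by rewrite /= (s_sym S y e) ey P.
    by rewrite cons_uniq yin U.
  by move: Sz; rewrite /=; lia.
Qed.

Lemma cx_has_label (X : finType) (G : xgraph X) (x0 : 'I_(nv G)) :
  in_CX G -> exists a : X, True.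
Proof.
move=> CX; case: (boolP [exists v, [exists a, lab G a == v]]) => [/existsP [v /existsP [a _]]|N].
  by exists a.
exfalso; have S := cx_simple CX; have [_ [_ [_ D]]] := CX.
have D2 : forall x, 2 <= deg G x.
  move=> x; rewrite D //; case=> a ea; move: N; rewrite negb_exists => /forallP /(_ x).
  by rewrite negb_exists => /forallP /(_ a); rewrite ea eqxx.
by apply: (walk S (cx_acyclic CX) D2 (k := nv G) (e := x0) (p := [::])); rewrite ?leq_subr.
Qed.

Definition cg (X : finType) (G : xgraph X) (u v : 'I_(nv G)) (u0 : 'I_(nv G).-1)
  (x : 'I_(nv G)) : 'I_(nv G).-1 :=
  odflt u0 (unlift v (if x == v then u else x)).
Arguments cg {X} G u v u0 x.

Definition cw (X : finType) (G : xgraph X) (u v : 'I_(nv G)) (u0 : 'I_(nv G).-1) : xgraph X :=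
  @XGraph X (nv G).-1
    (fun a b => (a != b) && [exists a0, exists b0,
        (cg G u v u0 a0 == a) && (cg G u v u0 b0 == b) && adj G a0 b0])
    (fun x => cg G u v u0 (lab G x)).
Arguments cw {X} G u v u0.

Lemma cw_ctr (X : finType) (G : xgraph X) u v u0 :
  simple G -> adj G u v -> @ctr X G (cw G u v u0) u v (cg G u v u0).
Proof.
move=> S uv; have uvn := s_neq S uv.
pose r x := if x == v then u else x.
have rv : forall x, v != r x.
  by move=> x; rewrite /r; case: (eqVneq x v) => [_|xv]; rewrite eq_sym.
have key : forall x, lift v (cg G u v u0 x) = r x.
  move=> x; have [k e1 e2] := unlift_some (rv x).
  by rewrite /cg -/(r x) e2 /= e1.
have fib : forall x y, cg G u v u0 x = cg G u v u0 y <-> r x = r y.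
  move=> x y; split => [e|e]; first by rewrite -!key e.
  by apply: (@lift_inj _ v); rewrite !key.
split => //.
- move=> y; exists (lift v y); rewrite /cg.
  by rewrite lift_eqF liftK.
- move=> x y; apply: (iff_trans (fib x y)); rewrite /r /upair.
  case: (eqVneq x v) => [->|xv]; case: (eqVneq y v) => [->|yv] /=.
  + by split => // _; left.
  + split => [<-|[e|H]]; [by right; rewrite eqxx orbT| by move: yv; rewrite -e eqxx| by move: H; rewrite andbF /= => /eqP].
  + split => [->|[e|H]]; [by right; rewrite eqxx| by move: xv; rewrite e eqxx| by move: H; rewrite andbT orbF => /eqP].
  + by split => [->|[->|]] //; [left | rewrite andbF].
- move=> a b; split.
    move=> /andP[/eqP ab /existsP [a0 /existsP [b0 /andP[/andP[/eqP ea /eqP eb] e]]]].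
    by split => //; exists a0, b0.
  move=> [ab [a0 [b0 [ea eb e]]]]; apply/andP; split; first by apply/eqP.
  by apply/existsP; exists a0; apply/existsP; exists b0; rewrite ea eb !eqxx.
Qed.

Lemma ctr_forest (X : finType) (G w : xgraph X) u v g :
  in_CX G -> @ctr X G w u v g -> is_Xforest w.
Proof.
move=> CX C; have S := cx_simple CX.
split; first exact: ctr_simple S C.
split; first exact: ctr_acyclic S (cx_acyclic CX) C.
split; last by move=> y nl; apply: ctr_deg3 CX C nl.
move=> y; have [a _] := cx_has_label u CX.
exists a; have [[_ [_ Cn]] _] := CX; have [_ _ _ _ L] := C.
by rewrite -(preK y C) L; apply: ctr_connect C (Cn _ _).
Qed.

Unset Implicit Arguments.

Theorem mainTheorem5 (X : finType) (Ci Cj : xgraph X) :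
  in_CX Ci -> in_CX Cj -> ~ iso Ci Cj ->
  ((exists w : xgraph X, is_Xforest w /\ covby w Ci /\ covby w Cj)
   <-> NNI Ci Cj).
Proof.
move=> Xi Xj NI; split.
  move=> [w [_ [[ci|si] [cj|sj]]]].
  - move/contractionP: ci => [u [v [g C]]]; move/contractionP: cj => [u' [v' [h D]]].
    exact: main_ctr Xi Xj C D NI.
  - by case: (sd_ctr Xj Xi sj ci).
  - by case: (sd_ctr Xi Xj si cj).
  - by case: NI; apply: sd_sd Xi Xj si sj.
move=> [u [v [b [c [[uv Lu Lv ub bv] [vc [cu Iso]]]]]]].
have S := cx_simple Xi; have uvn := s_neq S uv.
have vun : v != u by rewrite eq_sym.
have [u0 _ _] := unlift_some vun.
have C := cw_ctr u0 S uv.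
exists (cw Ci u v u0); split; first exact: ctr_forest Xi C.
split; first by left; apply/contractionP; exists u, v, (cg Ci u v u0).
have C' := nni_ctr S C ub bv vc cu.
have [u' [v' [h D]]] := ctr_iso C' Iso.
by left; apply/contractionP; exists u', v', h.
Qed.
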